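(* Let $p\ge 7$ be a prime. Then $$\sum_{k=1}^{p-1}\frac{H_k^2}{k^2}\equiv 0,\qquad \sum_{k=1}^{p-1}\frac{H_k H_{k,2}}{k}\equiv 0,\qquad \sum_{k=1}^{p-1}\frac{H_k^3}{k}\equiv 0\pmod{p}.$$
   Context: For positive integers $n,m$, $H_{n,m}=\sum_{k=1}^n 1/k^m$ and $H_n=H_{n,1}$. Congruences modulo $p$ are taken in the ring of rationals with denominators not divisible by $p$. *)

(* Defs.v *)
From HB Require Import structures.
From mathcomp Require Import all_boot all_order all_algebra.
Set Implicit Arguments. Unset Strict Implicit. Unset Printing Implicit Defensive.
Import Order.TTheory GRing.Theory Num.Theory.
Local Open Scope ring_scope.

Definition Hgen (n m : nat) : rat := \sum_(1 <= k < n.+1) (k%:R ^+ m)^-1.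
Definition H (n : nat) : rat := Hgen n 1.

Definition p_integral (p : nat) (x : rat) : bool := ~~ (p %| denq x)%Z.

Definition cong_rat (p : nat) (x y : rat) : Prop :=
  p_integral p x /\ p_integral p y /\
  exists z : rat, p_integral p z /\ x - y = p%:R * z.

(* Main.v *)
Require Import Defs.
From HB Require Import structures.
From mathcomp Require Import all_boot all_order all_algebra.
From mathcomp Require Import zify ring.
Set Implicit Arguments. Unset Strict Implicit. Unset Printing Implicit Defensive.
Import Order.TTheory GRing.Theory Num.Theory.
Local Open Scope ring_scope.

Section HarmSec.
Variable F : fieldType.
Variable n : nat.
Hypothesis hF : forall k, (k%:R == 0 :> F) = (n.+1 %| k)%N.
Hypothesis hpr : prime n.+1.
Hypothesis h6 : (6 <= n)%N.

Definition a k : F := (k%:R)^-1.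

Lemma natr_neq0 k : (0 < k <= n)%N -> k%:R != 0 :> F.
Proof.
case/andP=> k0 kn; rewrite hF; apply/negP => /(dvdn_leq k0); lia.
Qed.

Lemma natrF_inj i j : (i <= n)%N -> (j <= n)%N -> i%:R = j%:R :> F -> i = j.
Proof.
wlog ij : i j / (i <= j)%N.
  move=> W hi hj e; case: (leqP i j) => c; first exact: W.
  by symmetry; apply: W => //; apply: ltnW.
move=> hi hj e; apply/eqP; rewrite eqn_leq ij /=.
have : (j - i)%:R == 0 :> F by rewrite natrB // e subrr.
case: (posnP (j - i)) => [|d0]; first by move=> /eqP; rewrite subn_eq0.
by move/negP: (@natr_neq0 (j - i) ltac:(apply/andP; split; [done|lia])).
Qed.

Lemma natr_p : n.+1%:R = 0 :> F.
Proof. by apply/eqP; rewrite hF. Qed.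

Lemma natrN k : (k <= n.+1)%N -> (n.+1 - k)%:R = - k%:R :> F.
Proof. by move=> kn; rewrite natrB // natr_p sub0r. Qed.

Lemma a_rev k : (k <= n.+1)%N -> a (n.+1 - k) = - a k.
Proof. by move=> kn; rewrite /a natrN // invrN. Qed.

Lemma two_neq0 : 2%:R != 0 :> F.
Proof. by apply: natr_neq0; apply/andP; split; [done|lia]. Qed.

Lemma sign_sq i : (-1) ^+ i * (-1) ^+ i = 1 :> F.
Proof. by rewrite -exprMn mulrNN mulr1 expr1n. Qed.

Lemma natr_mod k : (k %% n.+1)%:R = k%:R :> F.
Proof. by rewrite {2}(divn_eq k n.+1) natrD natrM natr_p mulr0 add0r. Qed.


Definition hs m k := \sum_(i < k) a i.+1 ^+ m.

Lemma hsS m k : hs m k.+1 = hs m k + a k.+1 ^+ m.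
Proof. by rewrite /hs big_ord_recr. Qed.

Lemma a0 : a 0 = 0.
Proof. by rewrite /a invr0. Qed.

Lemma pw_zero m c : (0 < m)%N -> (0 < c <= n)%N -> c%:R ^+ m != 1 :> F -> hs m n = 0.
Proof.
move=> m0 hc cm.
have -> : hs m n = \sum_(i < n.+1) a i ^+ m.
  by rewrite big_ord_recl a0 expr0n gtn_eqF // add0r.
set S := \sum_(i < n.+1) _.
have hlt : forall i : 'I_n.+1, ((c * i) %% n.+1 < n.+1)%N.
  by move=> i; rewrite ltn_pmod.
pose hm (i : 'I_n.+1) : 'I_n.+1 := Ordinal (hlt i).
have hinj : injective hm.
  move=> i j hij.
  have := congr1 (fun k : 'I_n.+1 => (val k)%:R : F) hij.
  rewrite /= !natr_mod !natrM => /mulfI e.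
  apply: val_inj; apply: natrF_inj; [by move: (ltn_ord i)|by move: (ltn_ord j)|].
  by apply: e; apply: natr_neq0.
have eS : S = (a c) ^+ m * S.
  rewrite {1}/S (reindex_inj hinj) /= /S mulr_sumr; apply: eq_bigr => i _.
  by rewrite /a natr_mod natrM invfM exprMn.
have : (1 - a c ^+ m) * S = 0 by rewrite mulrBl mul1r -eS subrr.
move/eqP; rewrite mulf_eq0 => /orP [|/eqP //].
rewrite subr_eq0 /a exprVn eq_sym invr_eq1 => e; by rewrite e in cm.
Qed.

Lemma nR : n%:R = -1 :> F.
Proof. by apply/eqP; rewrite -subr_eq0 opprK natr1 natr_p. Qed.

Lemma m1_neq1 : (-1 : F) != 1.
Proof.
apply/negP => /eqP e; move: two_neq0.
have -> : (2%:R : F) = 1 + 1 by rewrite -natr1.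
by rewrite -{1}e addNr eqxx.
Qed.

Lemma pw1 : hs 1 n = 0.
Proof.
apply: (@pw_zero 1 n) => //; first by apply/andP; split; [lia|].
by rewrite nR expr1 m1_neq1.
Qed.

Lemma pw3 : hs 3 n = 0.
Proof.
apply: (@pw_zero 3 n) => //; first by apply/andP; split; [lia|].
by rewrite nR -signr_odd /= expr1 m1_neq1.
Qed.

Lemma pw2 : hs 2 n = 0.
Proof.
apply: (@pw_zero 2 2) => //; first by apply/andP; split; [lia|lia].
rewrite -natrX; apply/negP => /eqP e.
have h4 : (2 ^ 2 <= n)%N by rewrite expnS expn1; lia.
have h1 : (1 <= n)%N by lia.
by have := natrF_inj h4 h1 e.
Qed.

Lemma pw4 : hs 4 n = 0.
Proof.
apply: (@pw_zero 4 2) => //; first by apply/andP; split; [lia|lia].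
apply/negP => /eqP e.
have : ((2 ^ 4 - 1)%N%:R : F) = 0 by rewrite natrB // natrX e subrr.
rewrite -[(2^4-1)%N]/(3*5)%N natrM; apply/eqP.
by rewrite mulf_neq0 //; apply: natr_neq0; apply/andP; split; lia.
Qed.


Lemma refl_sum (f : nat -> F) : \sum_(i < n) f i.+1 = \sum_(i < n) f (n - i)%N.
Proof.
rewrite (reindex_inj rev_ord_inj) /=; apply: eq_bigr => i _.
by rewrite subnSK.
Qed.

Lemma hs_refl m k : hs m n = 0 -> (k <= n)%N ->
  hs m (n - k) = (-1) ^+ m.+1 * hs m k.
Proof.
move=> hn; elim: k => [|k IH] kn; first by rewrite subn0 hn /hs big_ord0 mulr0.
have e1 : hs m (n - k) = hs m (n - k.+1) + a (n - k) ^+ m.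
  by have := hsS m (n - k.+1); rewrite subnSK.
have e2 : a (n - k) = - a k.+1.
  by rewrite -subSS a_rev // ltnW.
rewrite (hsS m k); move: e1; rewrite IH ?(ltnW kn) // e2 => e1.
have -> : hs m (n - k.+1) = (-1) ^+ m.+1 * hs m k - (- a k.+1) ^+ m.
  by rewrite e1 addrK.
rewrite (exprNn (a k.+1) m) exprS; ring.
Qed.


Lemma a_refl i : (i <= n)%N -> a (n - i) = - a i.+1.
Proof. by move=> hi; rewrite -subSS a_rev. Qed.

Lemma hs_at m i : hs m n = 0 -> (i < n)%N ->
  hs m (n - i) = (-1) ^+ m.+1 * (hs m i.+1 - a i.+1 ^+ m).
Proof. by move=> hn hi; rewrite hs_refl // ?(ltnW hi) // hsS addrK. Qed.

Lemma half0 (X : F) : X = - X -> X = 0.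
Proof.
move=> e; have : X * 2%:R = 0 by rewrite mulr_natr mulr2n {1}e addNr.
by move/eqP; rewrite mulf_eq0 (negbTE two_neq0) orbF => /eqP.
Qed.

Lemma E0 : \sum_(i < n) hs 1 i.+1 * a i.+1 ^+ 3 = 0.
Proof.
apply: half0.
have key : \sum_(i < n) hs 1 i.+1 * a i.+1 ^+ 3 =
  - (\sum_(i < n) hs 1 i.+1 * a i.+1 ^+ 3) + hs 4 n.
  rewrite {1}(refl_sum (fun k => hs 1 k * a k ^+ 3)) /=.
  have -> : hs 4 n = \sum_(i < n) a i.+1 ^+ 4 by [].
  rewrite -sumrN -big_split /=.
  apply: eq_bigr => i _; rewrite hs_at ?pw1 // a_refl ?(ltnW (ltn_ord i)) //.
  ring.
by rewrite pw4 addr0 in key.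
Qed.

Lemma G0 : \sum_(i < n) hs 2 i.+1 * a i.+1 ^+ 2 = 0.
Proof.
apply: half0.
have key : \sum_(i < n) hs 2 i.+1 * a i.+1 ^+ 2 =
  - (\sum_(i < n) hs 2 i.+1 * a i.+1 ^+ 2) + hs 4 n.
  rewrite {1}(refl_sum (fun k => hs 2 k * a k ^+ 2)) /=.
  have -> : hs 4 n = \sum_(i < n) a i.+1 ^+ 4 by [].
  rewrite -sumrN -big_split /=.
  apply: eq_bigr => i _; rewrite hs_at ?pw2 // a_refl ?(ltnW (ltn_ord i)) //.
  ring.
by rewrite pw4 addr0 in key.
Qed.

Lemma T0 : \sum_(i < n) hs 3 i.+1 * a i.+1 ^+ 1 = 0.
Proof.
apply: half0.
have key : \sum_(i < n) hs 3 i.+1 * a i.+1 ^+ 1 =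
  - (\sum_(i < n) hs 3 i.+1 * a i.+1 ^+ 1) + hs 4 n.
  rewrite {1}(refl_sum (fun k => hs 3 k * a k ^+ 1)) /=.
  have -> : hs 4 n = \sum_(i < n) a i.+1 ^+ 4 by [].
  rewrite -sumrN -big_split /=.
  apply: eq_bigr => i _; rewrite hs_at ?pw3 // a_refl ?(ltnW (ltn_ord i)) //.
  ring.
by rewrite pw4 addr0 in key.
Qed.


Definition P (f : nat -> F) k := \sum_(i < k) f i.+1 * a i.+1.
Definition T (f : nat -> F) k := \sum_(i < k) (-1) ^+ i * ('C(k, i.+1))%:R * f i.+1.

Lemma T_pascal f m : T f m.+1 = T f m + \sum_(i < m.+1) (-1) ^+ i * ('C(m, i))%:R * f i.+1.
Proof.
rewrite /T.
have -> : \sum_(i < m.+1) (-1) ^+ i * ('C(m.+1, i.+1))%:R * f i.+1 =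
   \sum_(i < m.+1) ((-1) ^+ i * ('C(m, i.+1))%:R * f i.+1 + (-1) ^+ i * ('C(m, i))%:R * f i.+1).
  by apply: eq_bigr => i _; rewrite binS natrD; ring.
by rewrite big_split /= big_ord_recr /= bin_small // mulr0 mul0r addr0.
Qed.

Lemma T1 m : T (fun _ => 1) m.+1 = 1.
Proof.
elim: m => [|m IH]; first by rewrite /T big_ord1 /= bin1 mulr1 expr0 mul1r.
rewrite T_pascal IH big_ord_recl /= bin0 expr0 !mul1r.
have -> : \sum_(i < m.+1) (-1) ^+ (bump 0 i) * ('C(m.+1, bump 0 i))%:R * 1 = - T (fun _ => 1) m.+1.
  rewrite /T -sumrN; apply: eq_bigr => i _; rewrite /bump /= exprS; ring.
by rewrite IH addrC subrK.
Qed.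


Lemma bin_a m i : (m < n)%N -> (i <= m)%N ->
  ('C(m, i))%:R * a i.+1 = ('C(m.+1, i.+1))%:R * a m.+1.
Proof.
move=> hm hi.
have e := congr1 (fun x => x%:R : F) (mul_bin_diag m.+1 i).
rewrite /= !natrM in e.
have hi0 : (i.+1)%:R != 0 :> F by apply: natr_neq0; apply/andP; split; lia.
have hm0 : (m.+1)%:R != 0 :> F by apply: natr_neq0; apply/andP; split; lia.
rewrite /a -[('C(m, i))%:R](mulKf hm0) e.
by field; rewrite !(addrC 1) !natr1 hm0 hi0.
Qed.

Lemma L3 f m : (m <= n)%N -> T (fun k => f k * a k) m = P (T f) m.
Proof.
elim: m => [|m IH] hm; first by rewrite /T /P !big_ord0.
rewrite T_pascal IH ?(ltnW hm) // /P [in RHS]big_ord_recr /=; congr (_ + _).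
rewrite /T mulr_suml; apply: eq_bigr => i _.
transitivity ((-1) ^+ i * (('C(m, i))%:R * a i.+1) * f i.+1); first by ring.
rewrite bin_a //; first by ring.
by have := ltn_ord i; rewrite ltnS.
Qed.

Lemma L2 f m : (m < n)%N -> T (P f) m.+1 = T f m.+1 * a m.+1.
Proof.
move=> hm.
have hm0 : (m.+1)%:R != 0 :> F by apply: natr_neq0; apply/andP; split; lia.
suff e : T f m.+1 = (m.+1)%:R * T (P f) m.+1.
  by rewrite e /a mulrC mulrA mulVf // mul1r.
set G := P f.
have e1 : T f m.+1 = (m.+1)%:R * \sum_(i < m.+1) ((-1) ^+ i * ('C(m, i))%:R * (G i.+1 - G i)).
  rewrite /T mulr_sumr; apply: eq_bigr => i _.
  have hi0 : (i.+1)%:R != 0 :> F.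
    by apply: natr_neq0; apply/andP; split; [|have := ltn_ord i]; lia.
  have eG : G i.+1 - G i = f i.+1 * a i.+1 by rewrite /G /P big_ord_recr /= addrC addrK.
  have e := congr1 (fun x => x%:R : F) (mul_bin_diag m.+1 i).
  rewrite /= !natrM in e.
  rewrite eG /a.
  have -> : ('C(m.+1, i.+1))%:R = (m.+1)%:R * ('C(m, i))%:R / (i.+1)%:R :> F.
    by rewrite e mulrC mulKf.
  by field; rewrite (addrC 1) natr1.
rewrite e1; congr (_ * _).
rewrite T_pascal.
have -> : \sum_(i < m.+1) (-1) ^+ i * ('C(m, i))%:R * (G i.+1 - G i) =
  \sum_(i < m.+1) (-1) ^+ i * ('C(m, i))%:R * G i.+1 -
  \sum_(i < m.+1) (-1) ^+ i * ('C(m, i))%:R * G i.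
  by rewrite -sumrB; apply: eq_bigr => i _; ring.
rewrite addrC; congr (_ + _).
rewrite big_ord_recl /= /G /P big_ord0 mulr0 add0r /T -sumrN.
by apply: eq_bigr => i _; rewrite /bump /= exprS; ring.
Qed.

Lemma binp k : (k <= n)%N -> ('C(n, k))%:R = (-1) ^+ k :> F.
Proof.
elim: k => [|k IH] hk; first by rewrite bin0 expr0.
have : ('C(n.+1, k.+1))%:R = 0 :> F.
  by apply/eqP; rewrite hF prime_dvd_bin //; apply/andP; split; lia.
rewrite binS natrD IH ?(ltnW hk) // => /eqP; rewrite addr_eq0 => /eqP ->.
by rewrite exprS mulN1r.
Qed.

Lemma L4 f : T f n = - \sum_(i < n) f i.+1.
Proof.
rewrite /T -sumrN; apply: eq_bigr => i _.
rewrite binp ?(ltn_ord i) // exprS mulrCA sign_sq; ring.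
Qed.


Lemma T_ext f g k : (forall i, (i < k)%N -> f i.+1 = g i.+1) -> T f k = T g k.
Proof. by move=> e; apply: eq_bigr => i _; rewrite e. Qed.

Lemma P_ext f g k : (forall i, (i < k)%N -> f i.+1 = g i.+1) -> P f k = P g k.
Proof. by move=> e; apply: eq_bigr => i _; rewrite e. Qed.

Lemma u2_eq k : 2%:R * P (hs 1) k = hs 1 k ^+ 2 + hs 2 k.
Proof.
elim: k => [|k IH]; first by rewrite /P /hs !big_ord0 mulr0 expr0n /= addr0.
rewrite /P big_ord_recr /= -/(P (hs 1) k) !hsS mulrDr IH; ring.
Qed.

Lemma Th1 m : (m < n)%N -> T (hs 1) m.+1 = a m.+1.
Proof.
move=> hm; rewrite (@T_ext _ (P (fun _ => 1))); last first.
  by move=> i _; rewrite /hs /P; apply: eq_bigr => j _; rewrite expr1 mul1r.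
by rewrite L2 // T1 mul1r.
Qed.

Lemma Tu2 m : (m < n)%N -> T (P (hs 1)) m.+1 = a m.+1 ^+ 2.
Proof. by move=> hm; rewrite L2 // Th1 // expr2. Qed.

Lemma Tu2a m : (m <= n)%N -> T (fun k => P (hs 1) k * a k) m = hs 3 m.
Proof.
move=> hm; rewrite L3 //; apply: eq_bigr => i _.
rewrite Tu2; first by rewrite -exprSr.
by have := ltn_ord i; lia.
Qed.

Lemma A0 : \sum_(i < n) hs 1 i.+1 ^+ 2 * a i.+1 ^+ 2 = 0.
Proof.
have hw : \sum_(i < n) P (hs 1) i.+1 * a i.+1 * a i.+1 = 0.
  have := L4 (fun k => P (hs 1) k * a k * a k).
  rewrite L3 // (@P_ext _ (hs 3)); last first.
    by move=> i hi; rewrite Tu2a.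
  move=> e; apply: oppr_inj; rewrite oppr0 -e.
  by have := T0; rewrite /P; under eq_bigr do rewrite expr1.
have : \sum_(i < n) hs 1 i.+1 ^+ 2 * a i.+1 ^+ 2 =
  2%:R * (\sum_(i < n) P (hs 1) i.+1 * a i.+1 * a i.+1) - \sum_(i < n) hs 2 i.+1 * a i.+1 ^+ 2.
  rewrite mulr_sumr -sumrB; apply: eq_bigr => i _.
  rewrite !mulrA u2_eq; ring.
by rewrite hw G0 mulr0 subrr.
Qed.


Lemma tele (u : nat -> F) k : \sum_(i < k) (u i.+1 - u i) = u k - u 0.
Proof.
elim: k => [|k IH]; first by rewrite big_ord0 subrr.
by rewrite big_ord_recr /= IH; ring.
Qed.

Lemma hs0 m : hs m 0 = 0.
Proof. by rewrite /hs big_ord0. Qed.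

Lemma B0 : \sum_(i < n) hs 1 i.+1 * hs 2 i.+1 * a i.+1 = 0.
Proof.
have t := tele (fun k => hs 1 k ^+ 2 * hs 2 k) n.
rewrite /= pw1 !hs0 expr0n /= !mul0r subrr in t.
have e : \sum_(i < n) ((hs 1 i.+1 ^+ 2 * hs 2 i.+1) - hs 1 i ^+ 2 * hs 2 i) =
  \sum_(i < n) (hs 1 i.+1 ^+ 2 * a i.+1 ^+ 2 + 2%:R * (hs 1 i.+1 * hs 2 i.+1 * a i.+1)
     - 2%:R * (hs 1 i.+1 * a i.+1 ^+ 3) - hs 2 i.+1 * a i.+1 ^+ 2 + a i.+1 ^+ 4).
  by apply: eq_bigr => i _; rewrite !hsS; ring.
rewrite t big_split /= !sumrB big_split /= -!mulr_sumr A0 E0 G0 in e.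
have h4 : \sum_(i < n) a i.+1 ^+ 4 = hs 4 n by [].
move: e; rewrite h4 pw4 mulr0 !subr0 add0r addr0 => /esym /eqP.
by rewrite mulf_eq0 (negbTE two_neq0) /= => /eqP.
Qed.

Lemma C0 : \sum_(i < n) hs 1 i.+1 ^+ 3 * a i.+1 = 0.
Proof.
have t := tele (fun k => hs 1 k ^+ 4) n.
rewrite /= pw1 !hs0 expr0n /= subrr in t.
have e : \sum_(i < n) (hs 1 i.+1 ^+ 4 - hs 1 i ^+ 4) =
  \sum_(i < n) (4%:R * (hs 1 i.+1 ^+ 3 * a i.+1) - 6%:R * (hs 1 i.+1 ^+ 2 * a i.+1 ^+ 2)
     + 4%:R * (hs 1 i.+1 * a i.+1 ^+ 3) - a i.+1 ^+ 4).
  by apply: eq_bigr => i _; rewrite !hsS; ring.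
rewrite t sumrB big_split /= sumrB /= -!mulr_sumr A0 E0 in e.
have h4 : \sum_(i < n) a i.+1 ^+ 4 = hs 4 n by [].
move: e; rewrite h4 pw4 !mulr0 subr0 addr0 subr0 => /esym /eqP.
rewrite mulf_eq0 => /orP [|/eqP //].
by rewrite (negbTE (natr_neq0 _)) //; apply/andP; split; lia.
Qed.

End HarmSec.

Section RedSec.
Variable F : fieldType.
Variable p : nat.
Hypothesis hpr : prime p.
Hypothesis hF : forall k, (k%:R == 0 :> F) = (p %| k)%N.

Lemma hFz (z : int) : (z%:~R == 0 :> F) = (p %| z)%Z.
Proof.
rewrite dvdzE /=; case: z => k.
  by rewrite -hF.
by rewrite NegzE intrN oppr_eq0 -hF.
Qed.

Definition red (x : rat) : F := (numq x)%:~R / (denq x)%:~R.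

Lemma red_rep (u v : int) : ~~ (p %| v)%Z ->
  p_integral p (u%:~R / v%:~R) /\ red (u%:~R / v%:~R) = u%:~R / v%:~R.
Proof.
move=> hv.
set x := u%:~R / v%:~R.
have v0 : v != 0 by apply: contraNneq hv => ->; rewrite dvdz0.
have d0 := denq_neq0 x.
have ex : x = (numq x)%:~R / (denq x)%:~R by rewrite divq_num_den.
have eq_int : u * denq x = numq x * v.
  apply: (@intr_inj rat); rewrite !intrM.
  have v0' : (v%:~R : rat) != 0 by rewrite intr_eq0.
  have d0' : ((denq x)%:~R : rat) != 0 by rewrite intr_eq0.
  apply/eqP; rewrite -eqr_div //; apply/eqP; exact: ex.
have hd : ~~ (p %| denq x)%Z.
  apply: contra hv; rewrite !dvdzE => hpd.
  have : (`|denq x| %| `|numq x| * `|v|)%N.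
    by rewrite -abszM -eq_int abszM dvdn_mull.
  rewrite Gauss_dvdr; first by apply: dvdn_trans.
  by rewrite coprime_sym coprime_num_den.
split=> //.
rewrite /red.
have hvF : (v%:~R : F) != 0 by rewrite hFz.
have hdF : ((denq x)%:~R : F) != 0 by rewrite hFz.
have eF : (u%:~R * (denq x)%:~R : F) = (numq x)%:~R * v%:~R by rewrite -!intrM eq_int.
apply: (mulIf (mulf_neq0 hvF hdF)).
rewrite -/x.
transitivity ((numq x)%:~R * v%:~R : F); first by field.
by rewrite -eF; field.
Qed.


Definition Qr (x : rat) := exists u v : int, ~~ (p %| v)%Z /\ x = u%:~R / v%:~R.
Definition K (x : rat) (y : F) := Qr x /\ red x = y.

Lemma K_rep u v : ~~ (p %| v)%Z -> K (u%:~R / v%:~R) (u%:~R / v%:~R).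
Proof. by move=> hv; split; [exists u, v|case: (red_rep u hv)]. Qed.

Lemma ndvd_mul (v w : int) : ~~ (p %| v)%Z -> ~~ (p %| w)%Z -> ~~ (p %| v * w)%Z.
Proof. by rewrite !dvdzE abszM Euclid_dvdM // negb_or => -> ->. Qed.

Lemma K_add x y x' y' : K x x' -> K y y' -> K (x + y) (x' + y').
Proof.
move=> [[u [v [hv ->]]] <-] [[u' [v' [hv' ->]]] <-].
have v0 : v != 0 by apply: contraNneq hv => ->; rewrite dvdz0.
have v0' : v' != 0 by apply: contraNneq hv' => ->; rewrite dvdz0.
have hvF : (v%:~R : F) != 0 by rewrite hFz.
have hvF' : (v'%:~R : F) != 0 by rewrite hFz.
have hvQ : (v%:~R : rat) != 0 by rewrite intr_eq0.
have hvQ' : (v'%:~R : rat) != 0 by rewrite intr_eq0.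
have e : (u%:~R / v%:~R + u'%:~R / v'%:~R : rat) = (u * v' + u' * v)%:~R / (v * v')%:~R.
  by rewrite intrD !intrM; field; rewrite hvQ hvQ'.
rewrite (proj2 (red_rep u hv)) (proj2 (red_rep u' hv')) e.
have [h1 h2] := K_rep (u * v' + u' * v) (ndvd_mul hv hv').
split=> //; rewrite h2 intrD !intrM; field; by rewrite hvF hvF'.
Qed.

Lemma K_mul x y x' y' : K x x' -> K y y' -> K (x * y) (x' * y').
Proof.
move=> [[u [v [hv ->]]] <-] [[u' [v' [hv' ->]]] <-].
have v0 : v != 0 by apply: contraNneq hv => ->; rewrite dvdz0.
have v0' : v' != 0 by apply: contraNneq hv' => ->; rewrite dvdz0.
have hvF : (v%:~R : F) != 0 by rewrite hFz.
have hvF' : (v'%:~R : F) != 0 by rewrite hFz.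
have hvQ : (v%:~R : rat) != 0 by rewrite intr_eq0.
have hvQ' : (v'%:~R : rat) != 0 by rewrite intr_eq0.
have e : (u%:~R / v%:~R * (u'%:~R / v'%:~R) : rat) = (u * u')%:~R / (v * v')%:~R.
  by rewrite !intrM; field; rewrite hvQ hvQ'.
rewrite (proj2 (red_rep u hv)) (proj2 (red_rep u' hv')) e.
have [h1 h2] := K_rep (u * u') (ndvd_mul hv hv').
split=> //; rewrite h2 !intrM; field; by rewrite hvF hvF'.
Qed.

Lemma K_inv x x' : K x x' -> x' != 0 -> K x^-1 x'^-1.
Proof.
move=> [[u [v [hv ->]]] <-].
rewrite (proj2 (red_rep u hv)) => hne.
have hu : ~~ (p %| u)%Z.
  by rewrite -hFz; apply: contra hne => /eqP ->; rewrite mul0r.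
rewrite invf_div; have [h1 h2] := K_rep v hu.
by split=> //; rewrite h2 invf_div.
Qed.

Lemma K_nat k : K k%:R k%:R.
Proof.
have h1 : ~~ (p %| 1)%Z by rewrite dvdzE /= Euclid_dvd1.
have := K_rep k h1; by rewrite !divr1.
Qed.

Lemma K_exp x x' m : K x x' -> K (x ^+ m) (x' ^+ m).
Proof.
move=> h; elim: m => [|m IH]; first by rewrite !expr0; exact: (K_nat 1).
by rewrite !exprS; apply: K_mul.
Qed.

Lemma K_sum (I : eqType) (r : seq I) (f : I -> rat) (g : I -> F) :
  (forall i, i \in r -> K (f i) (g i)) -> K (\sum_(i <- r) f i) (\sum_(i <- r) g i).
Proof.
move=> h; rewrite big_seq [X in K _ X]big_seq.
apply: (big_ind2 K) => //; first by exact: (K_nat 0).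
by move=> ? ? ? ?; apply: K_add.
Qed.


Lemma K_cong S : K S 0 ->
  [/\ p_integral p S, p_integral p 0 & exists z, p_integral p z /\ S - 0 = p%:R * z].
Proof.
move=> [[u [v [hv eS]]] hr]; subst S.
rewrite (proj2 (red_rep u hv)) in hr.
have hvF : (v%:~R : F) != 0 by rewrite hFz.
have hu : (p %| u)%Z.
  by rewrite -hFz; move/eqP: hr; rewrite mulf_eq0 invr_eq0 (negbTE hvF) orbF.
have h1 : ~~ (p %| 1)%Z by rewrite dvdzE /= Euclid_dvd1.
split.
- exact: (proj1 (red_rep u hv)).
- by have := proj1 (red_rep 0 h1); rewrite mul0r.
- exists ((u %/ p)%Z%:~R / v%:~R); split; first exact: (proj1 (red_rep _ hv)).
  rewrite subr0 -{1}(divzK hu) intrM mulrA; congr (_ / _).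
  by rewrite mulrC.
Qed.

End RedSec.

Lemma conv (F : fieldType) (n : nat) (f : nat -> F) :
  \sum_(1 <= k < n.+1) f k = \sum_(i < n) f i.+1.
Proof. by rewrite big_add1 /= big_mkord. Qed.

Theorem lemma2p9 (p : nat) (hp : prime p) (h7 : (7 <= p)%N) :
  cong_rat p (\sum_(1 <= k < p) H k ^+ 2 / k%:R ^+ 2) 0 /\
  cong_rat p (\sum_(1 <= k < p) H k * Hgen k 2 / k%:R) 0 /\
  cong_rat p (\sum_(1 <= k < p) H k ^+ 3 / k%:R) 0.
Proof.
have hF : forall k, (k%:R == 0 :> 'F_p) = (p %| k)%N.
  by move=> k; rewrite (dvdn_pcharf (pchar_Fp hp)).
have h6 : (6 <= p.-1)%N by lia.
have hF' : forall k, (k%:R == 0 :> 'F_p) = (p.-1.+1 %| k)%N.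
  by move=> k; rewrite prednK ?prime_gt0.
have hp' : prime p.-1.+1 by rewrite prednK ?prime_gt0.
have nz : forall k, (0 < k < p)%N -> (k%:R : 'F_p) != 0.
  move=> k /andP [k0 kp]; rewrite hF; apply/negP => /(dvdn_leq k0); lia.
have KH : forall k m, (k < p)%N ->
    K p (Hgen k m) (\sum_(1 <= j < k.+1) ((j%:R : 'F_p) ^+ m)^-1).
  move=> k m kp; apply: (K_sum hp hF) => j; rewrite mem_index_iota => /andP [j1 jk].
  apply: (K_inv hF); first exact: (K_exp hp hF) (K_nat hp hF _).
  by rewrite expf_neq0 // nz //; apply/andP; split; lia.
have Hhs : forall k m, \sum_(1 <= j < k.+1) ((j%:R : 'F_p) ^+ m)^-1 = hs 'F_p m k.
  by move=> k m; rewrite conv /hs; apply: eq_bigr => i _; rewrite exprVn.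
have pE : p = p.-1.+1 by rewrite prednK ?prime_gt0.
have cv : forall f : nat -> 'F_p, \sum_(1 <= k < p) f k = \sum_(i < p.-1) f i.+1.
  by move=> f; rewrite -conv prednK // prime_gt0.
have fin : forall S : rat, K p S (0 : 'F_p) -> cong_rat p S 0.
  by move=> S hS; case: (K_cong hp hF hS) => a1 a2 a3.
split; [|split]; apply: fin.
- have e : \sum_(1 <= k < p) (\sum_(1 <= j < k.+1) ((j%:R : 'F_p) ^+ 1)^-1) ^+ 2 / (k%:R : 'F_p) ^+ 2 = 0.
    rewrite cv -[RHS](A0 hF' hp' h6); apply: eq_bigr => i _; rewrite Hhs exprVn.
    done.
  rewrite -e; apply: (K_sum hp hF) => k; rewrite mem_index_iota => /andP [k1 kp].
  apply: (K_mul hp hF); first exact: (K_exp hp hF) (KH k 1 kp).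
  apply: (K_inv hF); first exact: (K_exp hp hF) (K_nat hp hF _).
  by rewrite expf_neq0 // nz //; apply/andP; split; lia.
- have e : \sum_(1 <= k < p) (\sum_(1 <= j < k.+1) ((j%:R : 'F_p) ^+ 1)^-1) *
       (\sum_(1 <= j < k.+1) ((j%:R : 'F_p) ^+ 2)^-1) / (k%:R : 'F_p) = 0.
    rewrite cv -[RHS](B0 hF' hp' h6); apply: eq_bigr => i _; rewrite !Hhs.
    done.
  rewrite -e; apply: (K_sum hp hF) => k; rewrite mem_index_iota => /andP [k1 kp].
  apply: (K_mul hp hF); first exact: (K_mul hp hF) (KH k 1 kp) (KH k 2 kp).
  apply: (K_inv hF); first exact: (K_nat hp hF).
  by rewrite nz //; apply/andP; split; lia.
- have e : \sum_(1 <= k < p) (\sum_(1 <= j < k.+1) ((j%:R : 'F_p) ^+ 1)^-1) ^+ 3 / (k%:R : 'F_p) = 0.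
    rewrite cv -[RHS](C0 hF' hp' h6); apply: eq_bigr => i _; rewrite Hhs.
    done.
  rewrite -e; apply: (K_sum hp hF) => k; rewrite mem_index_iota => /andP [k1 kp].
  apply: (K_mul hp hF); first exact: (K_exp hp hF) (KH k 1 kp).
  apply: (K_inv hF); first exact: (K_nat hp hF).
  by rewrite nz //; apply/andP; split; lia.
Qed.
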